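(* Let $R$ be any binary relation on $U$. Then $\mathrm{DM(RS)}$ is completely distributive if and only if one (equivalently, each) of the lattices $\wp(U)^{\blacktriangle}$, $\wp(U)^{\blacktriangledown}$, $\wp(U)^{\vartriangle}$, $\wp(U)^{\triangledown}$ (ordered by $\subseteq$) is completely distributive.
   Context: Let $U$ be a set and $R\subseteq U\times U$ a binary relation. For $x\in U$, $R(x)=\{y\in U\mid (x,y)\in R\}$ and $\breve R(x)=\{y\in U\mid (y,x)\in R\}$. For $X\subseteq U$: $X^{\blacktriangledown}=\{x\in U\mid R(x)\subseteq X\}$, $X^{\blacktriangle}=\{x\in U\mid R(x)\cap X\neq\emptyset\}$, $X^{\triangledown}=\{x\in U\mid \breve R(x)\subseteq X\}$, $X^{\vartriangle}=\{x\in U\mid \breve R(x)\cap X\neq\emptyset\}$; composites like $X^{\vartriangle\blacktriangledown}$ mean $(X^{\vartriangle})^{\blacktriangledown}$. $\wp(U)^{\blacktriangledown}=\{X^{\blacktriangledown}\mid X\subseteq U\}$ and similarly $\wp(U)^{\blacktriangle},\wp(U)^{\triangledown},\wp(U)^{\vartriangle}$; each is a complete lattice under $\subseteq$. $\mathcal S=\{x\in U\mid |R(x)|=1\}$. $\mathrm{RS}=\{(X^{\blacktriangledown},X^{\blacktriangle})\mid X\subseteq U\}$ ordered coordinatewise; $\mathrm{DM(RS)}$ is its Dedekind–MacNeille completion, identified with $\{(A,B)\in\wp(U)^{\blacktriangledown}\times\wp(U)^{\blacktriangle}\mid A^{\vartriangle\blacktriangle}\subseteq B,\ A\cap\mathcal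 S=B\cap\mathcal S\}$ ordered coordinatewise, with meets $\bigwedge_i(X_i,Y_i)=(\bigcap_iX_i,(\bigcap_iY_i)^{\triangledown\blacktriangle})$ and joins $\bigvee_i(X_i,Y_i)=((\bigcup_iX_i)^{\vartriangle\blacktriangledown},\bigcup_iY_i)$. A complete lattice is completely distributive if $\bigwedge_{i\in I}\bigvee_{j\in J}x_{i,j}=\bigvee_{f\colon I\to J}\bigwedge_{i\in I}x_{i,f(i)}$ for all doubly indexed families. *)

(* Defs.v *)
Set Implicit Arguments.

Section RoughSets.
Variables (U : Type) (R : U -> U -> Prop).

Definition subs (X Y : U -> Prop) : Prop := forall x, X x -> Y x.

Definition boxB (X : U -> Prop) : U -> Prop := fun x => forall y, R x y -> X y.    (* X^▼ *)
Definition diaB (X : U -> Prop) : U -> Prop := fun x => exists y, R x y /\ X y.    (* X^▲ *)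
Definition boxW (X : U -> Prop) : U -> Prop := fun x => forall y, R y x -> X y.    (* X^▽ *)
Definition diaW (X : U -> Prop) : U -> Prop := fun x => exists y, R y x /\ X y.    (* X^△ *)

(* ℘(U)^op = { X^op | X ⊆ U } *)
Definition image_of (op : (U -> Prop) -> (U -> Prop)) (A : U -> Prop) : Prop :=
  exists X, A = op X.

Definition Sgl (x : U) : Prop := exists y, R x y /\ forall z, R x z -> z = y.

(* DM(RS) identified with pairs (A,B) *)
Definition DMRS (p : (U -> Prop) * (U -> Prop)) : Prop :=
  image_of boxB (fst p) /\ image_of diaB (snd p) /\
  subs (diaB (diaW (fst p))) (snd p) /\
  (forall x, Sgl x -> ((fst p) x <-> (snd p) x)).

Definition pair_le (p q : (U -> Prop) * (U -> Prop)) : Prop :=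
  subs (fst p) (fst q) /\ subs (snd p) (snd q).

End RoughSets.

Definition isLub {T : Type} (L : T -> Prop) (le : T -> T -> Prop)
  (S : T -> Prop) (a : T) : Prop :=
  L a /\ (forall s, S s -> le s a) /\
  (forall b, L b -> (forall s, S s -> le s b) -> le a b).

Definition isGlb {T : Type} (L : T -> Prop) (le : T -> T -> Prop)
  (S : T -> Prop) (a : T) : Prop :=
  L a /\ (forall s, S s -> le a s) /\
  (forall b, L b -> (forall s, S s -> le b s) -> le b a).

(* Complete distributivity of the complete lattice (L, le):
   /\_i \/_j x_{i,j} = \/_{f : I -> J} /\_i x_{i, f i} for all doubly indexed families,
   where meets and joins are those of (L, le). *)
Definition completely_distributive {T : Type} (L : T -> Prop) (le : T -> T -> Prop) : Prop :=
  forall (I J : Type) (x : I -> J -> T), (forall i j, L (x i j)) ->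
  forall (s : I -> T) (m : T) (t : (I -> J) -> T) (n : T),
    (forall i, isLub L le (fun z => exists j, z = x i j) (s i)) ->
    isGlb L le (fun z => exists i, z = s i) m ->
    (forall f, isGlb L le (fun z => exists i, z = x i (f i)) (t f)) ->
    isLub L le (fun z => exists f, z = t f) n ->
    m = n.

(* Main.v *)
Require Import Defs.
From Stdlib Require Import Classical ClassicalEpsilon FunctionalExtensionality PropExtensionality.

Notation fam y := (fun z => exists k, z = y k).

Definition antisymL {T} (L : T -> Prop) (le : T -> T -> Prop) :=
  forall a b, L a -> L b -> le a b -> le b a -> a = b.
Definition transL {T} (L : T -> Prop) (le : T -> T -> Prop) :=
  forall a b c, L a -> L b -> L c -> le a b -> le b c -> le a c.
Definition completeL {T} (L : T -> Prop) (le : T -> T -> Prop) :=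
  forall (K : Type) (y : K -> T), (forall k, L (y k)) ->
    (exists a, isLub L le (fam y) a) /\ (exists a, isGlb L le (fam y) a).

Lemma lub_unique {T} (L : T -> Prop) le S (a b : T) :
  antisymL L le -> isLub L le S a -> isLub L le S b -> a = b.
Proof.
  intros H [La [Ua Ma]] [Lb [Ub Mb]].
  exact (H a b La Lb (Ma b Lb Ub) (Mb a La Ua)).
Qed.

Lemma glb_unique {T} (L : T -> Prop) le S (a b : T) :
  antisymL L le -> isGlb L le S a -> isGlb L le S b -> a = b.
Proof.
  intros H [La [Ua Ma]] [Lb [Ub Mb]].
  exact (H a b La Lb (Mb a La Ua) (Ma b Lb Ub)).
Qed.

Lemma comb {I J : Type} (g : (I -> J) -> I) :
  exists i0, forall j, exists f, g f = i0 /\ f i0 = j.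
Proof.
  apply NNPP; intro H.
  assert (H1 : forall i, exists j, forall f, ~ (g f = i /\ f i = j)).
  { intro i. apply NNPP. intro H2. apply H. exists i. intro j. apply NNPP. intro H3.
    apply H2. exists j. intros f Hf. apply H3. exists f. exact Hf. }
  set (h := fun i => proj1_sig (constructive_indefinite_description _ (H1 i))).
  apply (proj2_sig (constructive_indefinite_description _ (H1 (g h))) h).
  split; reflexivity.
Qed.

Lemma cd_dual {T} (L : T -> Prop) (le : T -> T -> Prop) :
  transL L le -> antisymL L le -> completeL L le ->
  completely_distributive L le -> completely_distributive L (fun a b => le b a).
Proof.
  intros Htr Has Hc Hcd I J x Hx s m t n Hs Hm Ht Hn.
  pose proof Hm as Hm1. pose proof Hn as Hn1.
  destruct Hm1 as [Lm [Um Mm]]. destruct Hn1 as [Ln [Un Mn]].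
  cbv beta in *.
  assert (Hmn : le m n).
  { apply Mm; [exact Ln|]. intros z [i ->].
    destruct (Hs i) as [Lsi [Usi Msi]]; cbv beta in Usi, Msi.
    apply Mn; [exact Lsi|]. intros z [f ->].
    destruct (Ht f) as [Ltf [Utf Mtf]]; cbv beta in Utf, Mtf.
    apply (Htr _ (x i (f i)) _ Lsi (Hx _ _) Ltf).
    - apply Usi. exists (f i). reflexivity.
    - apply Utf. exists i. reflexivity. }
  assert (Hu : forall g : (I -> J) -> I,
             exists u, isGlb L le (fam (fun f => x (g f) (f (g f)))) u).
  { intro g. exact (proj2 (Hc _ (fun f => x (g f) (f (g f))) (fun f => Hx _ _))). }
  set (u := fun g => proj1_sig (constructive_indefinite_description _ (Hu g))).
  assert (Hu' : forall g, isGlb L le (fam (fun f => x (g f) (f (g f)))) (u g)).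
  { intro g. exact (proj2_sig (constructive_indefinite_description _ (Hu g))). }
  assert (Lu : forall g, L (u g)) by (intro g; exact (proj1 (Hu' g))).
  destruct (proj1 (Hc _ u Lu)) as [n' Hn'].
  assert (E : n = n').
  { apply (Hcd (I -> J) I (fun f i => x i (f i)) (fun f i => Hx i (f i)) t n u n').
    - intro f. exact (Ht f).
    - exact Hn.
    - exact Hu'.
    - exact Hn'. }
  assert (Hn'm : le n' m).
  { destruct Hn' as [Ln' [Un' Mn']]. apply Mn'; [exact Lm|]. intros z [g ->].
    destruct (comb g) as [i0 Hi0].
    destruct (Hs i0) as [Lsi [Usi Msi]]; cbv beta in Usi, Msi.
    apply (Htr _ (s i0) _ (Lu g) Lsi Lm).
    - apply Msi; [exact (Lu g)|]. intros z [j ->]. destruct (Hi0 j) as [f [E1 E2]].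
      destruct (Hu' g) as [_ [Ug _]].
      specialize (Ug (x (g f) (f (g f))) (ex_intro _ f eq_refl)).
      rewrite E1 in Ug. rewrite E2 in Ug. exact Ug.
    - apply Um. exists i0. reflexivity. }
  apply Has; [exact Lm|exact Ln|exact Hmn|]. rewrite E. exact Hn'm.
Qed.

Lemma lift2 {I J T T'} (L : T -> Prop) (L' : T' -> Prop) (phi : T -> T') :
  (forall b, L' b -> exists a, L a /\ b = phi a) ->
  forall x' : I -> J -> T', (forall i j, L' (x' i j)) ->
  exists x, (forall i j, L (x i j)) /\ x' = (fun i j => phi (x i j)).
Proof.
  intros Hs x' Hx.
  exists (fun i j => proj1_sig (constructive_indefinite_description _ (Hs _ (Hx i j)))).
  split.
  - intros i j. exact (proj1 (proj2_sig (constructive_indefinite_description _ (Hs _ (Hx i j))))).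
  - apply functional_extensionality; intro i; apply functional_extensionality; intro j.
    exact (proj2 (proj2_sig (constructive_indefinite_description _ (Hs _ (Hx i j))))).
Qed.

Lemma lift1 {I T T'} (L : T -> Prop) (L' : T' -> Prop) (phi : T -> T') :
  (forall b, L' b -> exists a, L a /\ b = phi a) ->
  forall x' : I -> T', (forall i, L' (x' i)) ->
  exists x, (forall i, L (x i)) /\ x' = (fun i => phi (x i)).
Proof.
  intros Hs x' Hx.
  exists (fun i => proj1_sig (constructive_indefinite_description _ (Hs _ (Hx i)))).
  split.
  - intros i. exact (proj1 (proj2_sig (constructive_indefinite_description _ (Hs _ (Hx i))))).
  - apply functional_extensionality; intro i.
    exact (proj2 (proj2_sig (constructive_indefinite_description _ (Hs _ (Hx i))))).
Qed.

Lemma lub_pull {T T'} (L : T -> Prop) le (L' : T' -> Prop) le' (phi : T -> T') :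
  (forall a, L a -> L' (phi a)) ->
  (forall a b, L a -> L b -> (le a b <-> le' (phi a) (phi b))) ->
  forall K (y : K -> T) a, (forall k, L (y k)) -> L a ->
  isLub L' le' (fam (fun k => phi (y k))) (phi a) -> isLub L le (fam y) a.
Proof.
  intros HL Hiso K y a Hy La [_ [U M]].
  split; [exact La|]. split.
  - intros z [k ->]. apply (proj2 (Hiso _ _ (Hy k) La)). apply U. exists k. reflexivity.
  - intros b Lb Ub. apply (proj2 (Hiso _ _ La Lb)). apply M; [exact (HL _ Lb)|].
    intros z [k ->]. apply (proj1 (Hiso _ _ (Hy k) Lb)). apply Ub. exists k; reflexivity.
Qed.

Lemma glb_pull {T T'} (L : T -> Prop) le (L' : T' -> Prop) le' (phi : T -> T') :
  (forall a, L a -> L' (phi a)) ->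
  (forall a b, L a -> L b -> (le a b <-> le' (phi a) (phi b))) ->
  forall K (y : K -> T) a, (forall k, L (y k)) -> L a ->
  isGlb L' le' (fam (fun k => phi (y k))) (phi a) -> isGlb L le (fam y) a.
Proof.
  intros HL Hiso.
  exact (lub_pull L (fun a b => le b a) L' (fun a b => le' b a) phi HL
           (fun a b Ha Hb => Hiso b a Hb Ha)).
Qed.

Lemma cd_iso {T T'} (L : T -> Prop) le (L' : T' -> Prop) le' (phi : T -> T') :
  (forall a, L a -> L' (phi a)) ->
  (forall b, L' b -> exists a, L a /\ b = phi a) ->
  (forall a b, L a -> L b -> (le a b <-> le' (phi a) (phi b))) ->
  completely_distributive L le -> completely_distributive L' le'.
Proof.
  intros HL Hsur Hiso Hcd I J x' Hx' s' m' t' n' Hs Hm Ht Hn.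
  destruct (lift2 L L' phi Hsur x' Hx') as [x [Hx Ex]]. subst x'.
  destruct (lift1 L L' phi Hsur s' (fun i => proj1 (Hs i))) as [s [Ls Es]]. subst s'.
  destruct (lift1 L L' phi Hsur t' (fun f => proj1 (Ht f))) as [t [Lt Et]]. subst t'.
  destruct (Hsur m' (proj1 Hm)) as [m [Lm Em]]. subst m'.
  destruct (Hsur n' (proj1 Hn)) as [n [Ln En]]. subst n'.
  f_equal. apply (Hcd I J x Hx s m t n).
  - intro i. apply (lub_pull L le L' le' phi HL Hiso _ (x i) (s i) (Hx i) (Ls i)). exact (Hs i).
  - apply (glb_pull L le L' le' phi HL Hiso _ s m Ls Lm). exact Hm.
  - intro f. apply (glb_pull L le L' le' phi HL Hiso _ (fun i => x i (f i)) (t f)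
                      (fun i => Hx i (f i)) (Lt f)). exact (Ht f).
  - apply (lub_pull L le L' le' phi HL Hiso _ t n Lt Ln). exact Hn.
Qed.

Lemma cd_hom {T T'} (L : T -> Prop) le (L' : T' -> Prop) le' (pi : T -> T') :
  completeL L le -> antisymL L' le' ->
  (forall b, L' b -> exists a, L a /\ b = pi a) ->
  (forall K (y : K -> T) a, (forall k, L (y k)) -> isLub L le (fam y) a ->
      isLub L' le' (fam (fun k => pi (y k))) (pi a)) ->
  (forall K (y : K -> T) a, (forall k, L (y k)) -> isGlb L le (fam y) a ->
      isGlb L' le' (fam (fun k => pi (y k))) (pi a)) ->
  completely_distributive L le -> completely_distributive L' le'.
Proof.
  intros Hc Has Hsur Hl Hg Hcd I J x' Hx' s' m' t' n' Hs Hm Ht Hn.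
  destruct (lift2 L L' pi Hsur x' Hx') as [x [Hx Ex]]. subst x'.
  assert (Es : forall i, exists a, isLub L le (fam (x i)) a)
    by (intro i; exact (proj1 (Hc _ (x i) (Hx i)))).
  set (s := fun i => proj1_sig (constructive_indefinite_description _ (Es i))).
  assert (Hs0 : forall i, isLub L le (fam (x i)) (s i))
    by (intro i; exact (proj2_sig (constructive_indefinite_description _ (Es i)))).
  assert (Ls : forall i, L (s i)) by (intro i; exact (proj1 (Hs0 i))).
  destruct (proj2 (Hc _ s Ls)) as [m Hm0].
  assert (Et : forall f : I -> J, exists a, isGlb L le (fam (fun i => x i (f i))) a)
    by (intro f; exact (proj2 (Hc _ (fun i => x i (f i)) (fun i => Hx i (f i))))).
  set (t := fun f => proj1_sig (constructive_indefinite_description _ (Et f))).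
  assert (Ht0 : forall f, isGlb L le (fam (fun i => x i (f i))) (t f))
    by (intro f; exact (proj2_sig (constructive_indefinite_description _ (Et f)))).
  assert (Lt : forall f, L (t f)) by (intro f; exact (proj1 (Ht0 f))).
  destruct (proj1 (Hc _ t Lt)) as [n Hn0].
  assert (E : m = n) by exact (Hcd I J x Hx s m t n Hs0 Hm0 Ht0 Hn0).
  assert (Es' : s' = fun i => pi (s i)).
  { apply functional_extensionality. intro i.
    apply (lub_unique L' le' _ _ _ Has (Hs i)). exact (Hl _ (x i) (s i) (Hx i) (Hs0 i)). }
  assert (Et' : t' = fun f => pi (t f)).
  { apply functional_extensionality. intro f.
    apply (glb_unique L' le' _ _ _ Has (Ht f)).
    exact (Hg _ (fun i => x i (f i)) (t f) (fun i => Hx i (f i)) (Ht0 f)). }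
  subst s' t'.
  assert (Em : m' = pi m).
  { apply (glb_unique L' le' _ _ _ Has Hm). exact (Hg _ s m Ls Hm0). }
  assert (En : n' = pi n).
  { apply (lub_unique L' le' _ _ _ Has Hn). exact (Hl _ t n Lt Hn0). }
  rewrite Em, En, E. reflexivity.
Qed.

Lemma cd_prod {T1 T2} (L : T1 * T2 -> Prop) le (L1 : T1 -> Prop) le1 (L2 : T2 -> Prop) le2 :
  (forall p, L p -> L1 (fst p) /\ L2 (snd p)) ->
  (forall K (y : K -> T1 * T2) a, (forall k, L (y k)) -> isLub L le (fam y) a ->
     isLub L1 le1 (fam (fun k => fst (y k))) (fst a) /\
     isLub L2 le2 (fam (fun k => snd (y k))) (snd a)) ->
  (forall K (y : K -> T1 * T2) a, (forall k, L (y k)) -> isGlb L le (fam y) a ->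
     isGlb L1 le1 (fam (fun k => fst (y k))) (fst a) /\
     isGlb L2 le2 (fam (fun k => snd (y k))) (snd a)) ->
  completely_distributive L1 le1 -> completely_distributive L2 le2 ->
  completely_distributive L le.
Proof.
  intros HL Hl Hg C1 C2 I J x Hx s m t n Hs Hm Ht Hn.
  assert (Ls : forall i, L (s i)) by (intro i; exact (proj1 (Hs i))).
  assert (Lt : forall f, L (t f)) by (intro f; exact (proj1 (Ht f))).
  destruct m as [m1 m2]; destruct n as [n1 n2]. f_equal.
  - apply (C1 I J (fun i j => fst (x i j)) (fun i j => proj1 (HL _ (Hx i j)))
             (fun i => fst (s i)) m1 (fun f => fst (t f)) n1).
    + intro i. exact (proj1 (Hl _ (x i) (s i) (Hx i) (Hs i))).
    + exact (proj1 (Hg _ s (m1,m2) Ls Hm)).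
    + intro f. exact (proj1 (Hg _ (fun i => x i (f i)) (t f) (fun i => Hx i (f i)) (Ht f))).
    + exact (proj1 (Hl _ t (n1,n2) Lt Hn)).
  - apply (C2 I J (fun i j => snd (x i j)) (fun i j => proj2 (HL _ (Hx i j)))
             (fun i => snd (s i)) m2 (fun f => snd (t f)) n2).
    + intro i. exact (proj2 (Hl _ (x i) (s i) (Hx i) (Hs i))).
    + exact (proj2 (Hg _ s (m1,m2) Ls Hm)).
    + intro f. exact (proj2 (Hg _ (fun i => x i (f i)) (t f) (fun i => Hx i (f i)) (Ht f))).
    + exact (proj2 (Hl _ t (n1,n2) Lt Hn)).
Qed.

Section Concrete.
Variables (U : Type) (R : U -> U -> Prop).

Lemma pext (P Q : U -> Prop) : (forall x, P x <-> Q x) -> P = Q.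
Proof. intro H. apply functional_extensionality. intro x. apply propositional_extensionality. apply H. Qed.

Lemma subs_antisym (L : (U -> Prop) -> Prop) : antisymL L (@subs U).
Proof. intros a b _ _ H1 H2. apply pext. intro x; split; [exact (H1 x)|exact (H2 x)]. Qed.
Lemma subs_antisym' (L : (U -> Prop) -> Prop) : antisymL L (fun a b => @subs U b a).
Proof. intros a b _ _ H1 H2. apply pext. intro x; split; [exact (H2 x)|exact (H1 x)]. Qed.
Lemma subs_trans' (L : (U -> Prop) -> Prop) : transL L (fun a b => @subs U b a).
Proof. intros a b c _ _ _ H1 H2 x Hx. exact (H1 x (H2 x Hx)). Qed.

Lemma pair_antisym (L : (U -> Prop) * (U -> Prop) -> Prop) : antisymL L (@pair_le U).
Proof.
  intros [a1 a2] [b1 b2] _ _ [H1 H2] [H3 H4]. f_equal; apply pext; intro x.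
  - split; [exact (H1 x)|exact (H3 x)].
  - split; [exact (H2 x)|exact (H4 x)].
Qed.

Lemma fixD (a : U -> Prop) : image_of (diaB R) a <->
  (forall x, a x -> exists y, R x y /\ forall z, R z y -> a z).
Proof. split.
  - intros [X ->] x [y [Rxy Xy]]. exists y. split; [exact Rxy|]. intros z Rzy. exists y. split; assumption.
  - intro H. exists (boxW R a). apply pext. intro x. split.
    + intro ax. destruct (H x ax) as [y [Rxy Hy]]. exists y. split; [exact Rxy|]. intros z Rzy. exact (Hy z Rzy).
    + intros [y [Rxy Hy]]. exact (Hy x Rxy).
Qed.

Lemma fixB (a : U -> Prop) : image_of (boxB R) a <->
  (forall x, (forall y, R x y -> exists v, R v y /\ a v) -> a x).
Proof. split.
  - intros [X ->] x H y Rxy. destruct (H y Rxy) as [v [Rvy Hv]]. exact (Hv y Rvy).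
  - intro H. exists (diaW R a). apply pext. intro x. split.
    + intros ax y Rxy. exists x. split; assumption.
    + intro Hx. apply H. exact Hx.
Qed.

Lemma lubD K (y : K -> U -> Prop) : (forall k, image_of (diaB R) (y k)) ->
  isLub (image_of (diaB R)) (@subs U) (fam y) (fun x => exists k, y k x).
Proof.
  intro Hy. split; [|split].
  - apply (proj2 (fixD _)). intros x [k Hk]. destruct (proj1 (fixD _) (Hy k) x Hk) as [z [Rxz Hz]].
    exists z. split; [exact Rxz|]. intros w Rwz. exists k. exact (Hz w Rwz).
  - intros s [k ->] x Hx. exists k. exact Hx.
  - intros b _ Hb x [k Hk]. exact (Hb (y k) (ex_intro _ k eq_refl) x Hk).
Qed.

Lemma glbD K (y : K -> U -> Prop) : (forall k, image_of (diaB R) (y k)) ->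
  isGlb (image_of (diaB R)) (@subs U) (fam y) (diaB R (boxW R (fun z => forall k, y k z))).
Proof.
  intro Hy. split; [|split].
  - exists (boxW R (fun z => forall k, y k z)). reflexivity.
  - intros s [k ->] x [w [Rxw Hw]]. exact (Hw x Rxw k).
  - intros b Lb Hb x bx. destruct (proj1 (fixD b) Lb x bx) as [w [Rxw Hw]].
    exists w. split; [exact Rxw|]. intros z Rzw k. exact (Hb (y k) (ex_intro _ k eq_refl) z (Hw z Rzw)).
Qed.

Lemma glbB K (y : K -> U -> Prop) : (forall k, image_of (boxB R) (y k)) ->
  isGlb (image_of (boxB R)) (@subs U) (fam y) (fun x => forall k, y k x).
Proof.
  intro Hy. split; [|split].
  - apply (proj2 (fixB _)). intros x H k. apply (proj1 (fixB _) (Hy k)). intros w Rxw.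
    destruct (H w Rxw) as [v [Rvw Hv]]. exists v. split; [exact Rvw| exact (Hv k)].
  - intros s [k ->] x Hx. exact (Hx k).
  - intros b _ Hb x bx k. exact (Hb (y k) (ex_intro _ k eq_refl) x bx).
Qed.

Lemma lubB K (y : K -> U -> Prop) : (forall k, image_of (boxB R) (y k)) ->
  isLub (image_of (boxB R)) (@subs U) (fam y) (boxB R (diaW R (fun z => exists k, y k z))).
Proof.
  intro Hy. split; [|split].
  - exists (diaW R (fun z => exists k, y k z)). reflexivity.
  - intros s [k ->] x Hx w Rxw. exists x. split; [exact Rxw|]. exists k. exact Hx.
  - intros b Lb Hb x Hx. apply (proj1 (fixB b) Lb). intros w Rxw.
    destruct (Hx w Rxw) as [v [Rvw [k Hk]]]. exists v. split; [exact Rvw|].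
    exact (Hb (y k) (ex_intro _ k eq_refl) v Hk).
Qed.

Definition DMjoin {K} (y : K -> (U -> Prop) * (U -> Prop)) : (U -> Prop) * (U -> Prop) :=
  (boxB R (diaW R (fun z => exists k, fst (y k) z)), fun x => exists k, snd (y k) x).
Definition DMmeet {K} (y : K -> (U -> Prop) * (U -> Prop)) : (U -> Prop) * (U -> Prop) :=
  (fun x => forall k, fst (y k) x, diaB R (boxW R (fun z => forall k, snd (y k) z))).

Lemma lubDM K (y : K -> (U -> Prop) * (U -> Prop)) : (forall k, DMRS R (y k)) ->
  isLub (DMRS R) (@pair_le U) (fam y) (DMjoin y).
Proof.
  intro Hy.
  assert (H1 : forall k, image_of (boxB R) (fst (y k))) by (intro k; exact (proj1 (Hy k))).
  assert (H2 : forall k, image_of (diaB R) (snd (y k))) by (intro k; exact (proj1 (proj2 (Hy k)))).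
  assert (H3 : forall k, subs (diaB R (diaW R (fst (y k)))) (snd (y k)))
    by (intro k; exact (proj1 (proj2 (proj2 (Hy k))))).
  assert (H4 : forall k x, Sgl R x -> (fst (y k) x <-> snd (y k) x))
    by (intro k; exact (proj2 (proj2 (proj2 (Hy k))))).
  pose proof (lubB _ (fun k => fst (y k)) H1) as LB.
  pose proof (lubD _ (fun k => snd (y k)) H2) as LD.
  split; [|split].
  - unfold DMRS, DMjoin; cbn [fst snd]. split; [exact (proj1 LB)|]. split; [exact (proj1 LD)|]. split.
    + intros x [w [Rxw [v [Rvw Hv]]]]. destruct (Hv w Rvw) as [u [Ruw [k Hk]]].
      exists k. apply (H3 k). exists w. split; [exact Rxw|]. exists u. split; assumption.
    + intros x Sx. split.
      * intro Hx. destruct Sx as [y0 [Rxy0 Huniq]]. destruct (Hx y0 Rxy0) as [u [Ruy0 [k Hk]]].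
        exists k. apply (H3 k). exists y0. split; [exact Rxy0|]. exists u. split; assumption.
      * intros [k Hk]. apply (proj2 (H4 k x Sx)) in Hk. intros w Rxw. exists x. split; [exact Rxw|].
        exists k. exact Hk.
  - intros s [k ->]. split.
    + exact (proj1 (proj2 LB) (fst (y k)) (ex_intro _ k eq_refl)).
    + exact (proj1 (proj2 LD) (snd (y k)) (ex_intro _ k eq_refl)).
  - intros [C D] HCD Hb. unfold pair_le, DMjoin; cbn [fst snd]. split.
    + apply (proj2 (proj2 LB) C (proj1 HCD)). intros s [k ->].
      exact (proj1 (Hb (y k) (ex_intro _ k eq_refl))).
    + apply (proj2 (proj2 LD) D (proj1 (proj2 HCD))). intros s [k ->].
      exact (proj2 (Hb (y k) (ex_intro _ k eq_refl))).
Qed.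

Lemma glbDM K (y : K -> (U -> Prop) * (U -> Prop)) : (forall k, DMRS R (y k)) ->
  isGlb (DMRS R) (@pair_le U) (fam y) (DMmeet y).
Proof.
  intro Hy.
  assert (H1 : forall k, image_of (boxB R) (fst (y k))) by (intro k; exact (proj1 (Hy k))).
  assert (H2 : forall k, image_of (diaB R) (snd (y k))) by (intro k; exact (proj1 (proj2 (Hy k)))).
  assert (H3 : forall k, subs (diaB R (diaW R (fst (y k)))) (snd (y k)))
    by (intro k; exact (proj1 (proj2 (proj2 (Hy k))))).
  assert (H4 : forall k x, Sgl R x -> (fst (y k) x <-> snd (y k) x))
    by (intro k; exact (proj2 (proj2 (proj2 (Hy k))))).
  pose proof (glbB _ (fun k => fst (y k)) H1) as GB.
  pose proof (glbD _ (fun k => snd (y k)) H2) as GD.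
  split; [|split].
  - unfold DMRS, DMmeet; cbn [fst snd]. split; [exact (proj1 GB)|]. split; [exact (proj1 GD)|]. split.
    + intros x [w [Rxw [v [Rvw Hv]]]]. exists w. split; [exact Rxw|]. intros z Rzw k.
      apply (H3 k). exists w. split; [exact Rzw|]. exists v. split; [exact Rvw| exact (Hv k)].
    + intros x Sx. split.
      * intro Hx. destruct Sx as [y0 [Rxy0 _]]. exists y0. split; [exact Rxy0|].
        intros z Rzy0 k. apply (H3 k). exists y0. split; [exact Rzy0|].
        exists x. split; [exact Rxy0| exact (Hx k)].
      * intros [w [Rxw Hw]] k. apply (proj2 (H4 k x Sx)). exact (Hw x Rxw k).
  - intros s [k ->]. split.
    + exact (proj1 (proj2 GB) (fst (y k)) (ex_intro _ k eq_refl)).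
    + exact (proj1 (proj2 GD) (snd (y k)) (ex_intro _ k eq_refl)).
  - intros [C D] HCD Hb. unfold pair_le, DMmeet; cbn [fst snd]. split.
    + apply (proj2 (proj2 GB) C (proj1 HCD)). intros s [k ->].
      exact (proj1 (Hb (y k) (ex_intro _ k eq_refl))).
    + apply (proj2 (proj2 GD) D (proj1 (proj2 HCD))). intros s [k ->].
      exact (proj2 (Hb (y k) (ex_intro _ k eq_refl))).
Qed.

Lemma DM_lub_char K (y : K -> (U -> Prop) * (U -> Prop)) a :
  (forall k, DMRS R (y k)) -> isLub (DMRS R) (@pair_le U) (fam y) a ->
  isLub (image_of (boxB R)) (@subs U) (fam (fun k => fst (y k))) (fst a) /\
  isLub (image_of (diaB R)) (@subs U) (fam (fun k => snd (y k))) (snd a).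
Proof.
  intros Hy Ha.
  assert (E : a = DMjoin y) by exact (lub_unique _ _ _ _ _ (pair_antisym _) Ha (lubDM _ y Hy)).
  subst a. split.
  - exact (lubB _ (fun k => fst (y k)) (fun k => proj1 (Hy k))).
  - exact (lubD _ (fun k => snd (y k)) (fun k => proj1 (proj2 (Hy k)))).
Qed.

Lemma DM_glb_char K (y : K -> (U -> Prop) * (U -> Prop)) a :
  (forall k, DMRS R (y k)) -> isGlb (DMRS R) (@pair_le U) (fam y) a ->
  isGlb (image_of (boxB R)) (@subs U) (fam (fun k => fst (y k))) (fst a) /\
  isGlb (image_of (diaB R)) (@subs U) (fam (fun k => snd (y k))) (snd a).
Proof.
  intros Hy Ha.
  assert (E : a = DMmeet y) by exact (glb_unique _ _ _ _ _ (pair_antisym _) Ha (glbDM _ y Hy)).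
  subst a. split.
  - exact (glbB _ (fun k => fst (y k)) (fun k => proj1 (Hy k))).
  - exact (glbD _ (fun k => snd (y k)) (fun k => proj1 (proj2 (Hy k)))).
Qed.

Lemma DM_complete : completeL (DMRS R) (@pair_le U).
Proof. intros K y Hy. split; eexists; [apply lubDM|apply glbDM]; exact Hy. Qed.

Lemma DM_pair X : DMRS R (boxB R X, diaB R X).
Proof.
  split; [exists X; reflexivity|]. split; [exists X; reflexivity|]. split.
  - intros x [w [Rxw [v [Rvw Hv]]]]. exists w. split; [exact Rxw| exact (Hv w Rvw)].
  - intros x [y0 [Rxy0 Hu]]. split.
    + intro H. exists y0. split; [exact Rxy0| exact (H y0 Rxy0)].
    + intros [w [Rxw Xw]] z Rxz. rewrite (Hu z Rxz). rewrite <- (Hu w Rxw). exact Xw.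
Qed.

Lemma cd_DM_B : completely_distributive (DMRS R) (@pair_le U) ->
  completely_distributive (image_of (boxB R)) (@subs U).
Proof.
  refine (cd_hom _ _ _ _ fst DM_complete (subs_antisym _) _ _ _).
  - intros b [X ->]. exists (boxB R X, diaB R X). split; [apply DM_pair|reflexivity].
  - intros K y a Hy Ha. exact (proj1 (DM_lub_char _ y a Hy Ha)).
  - intros K y a Hy Ha. exact (proj1 (DM_glb_char _ y a Hy Ha)).
Qed.

Lemma cd_DM_D : completely_distributive (DMRS R) (@pair_le U) ->
  completely_distributive (image_of (diaB R)) (@subs U).
Proof.
  refine (cd_hom _ _ _ _ snd DM_complete (subs_antisym _) _ _ _).
  - intros b [X ->]. exists (boxB R X, diaB R X). split; [apply DM_pair|reflexivity].
  - intros K y a Hy Ha. exact (proj2 (DM_lub_char _ y a Hy Ha)).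
  - intros K y a Hy Ha. exact (proj2 (DM_glb_char _ y a Hy Ha)).
Qed.

Lemma cd_BD_DM : completely_distributive (image_of (boxB R)) (@subs U) ->
  completely_distributive (image_of (diaB R)) (@subs U) ->
  completely_distributive (DMRS R) (@pair_le U).
Proof.
  refine (cd_prod (DMRS R) (@pair_le U) (image_of (boxB R)) (@subs U)
            (image_of (diaB R)) (@subs U) _ _ _).
  - intros p Hp. exact (conj (proj1 Hp) (proj1 (proj2 Hp))).
  - intros K y a Hy Ha. exact (DM_lub_char _ y a Hy Ha).
  - intros K y a Hy Ha. exact (DM_glb_char _ y a Hy Ha).
Qed.

Lemma cd_galois (f g : (U -> Prop) -> U -> Prop) :
  (forall X Y, subs (f X) Y <-> subs X (g Y)) ->
  (completely_distributive (image_of f) (@subs U) <->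
   completely_distributive (image_of g) (@subs U)).
Proof.
  intro Hfg.
  assert (unit : forall X, subs X (g (f X))) by (intro X; apply Hfg; intros x h; exact h).
  assert (counit : forall Y, subs (f (g Y)) Y) by (intro Y; apply Hfg; intros x h; exact h).
  assert (mf : forall X Y, subs X Y -> subs (f X) (f Y)).
  { intros X Y H. apply Hfg. intros x h. exact (unit Y x (H x h)). }
  assert (mg : forall X Y, subs X Y -> subs (g X) (g Y)).
  { intros X Y H. apply Hfg. intros x h. exact (H x (counit X x h)). }
  assert (fgf : forall X, f (g (f X)) = f X).
  { intro X. apply pext. intro x. split; [exact (counit (f X) x) | exact (mf _ _ (unit X) x)]. }
  assert (gfg : forall Y, g (f (g Y)) = g Y).
  { intro Y. apply pext. intro x. split; [exact (mg _ _ (counit Y) x) | exact (unit (g Y) x)]. }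
  split.
  - apply (cd_iso _ _ _ _ g).
    + intros a _. exists a. reflexivity.
    + intros b [Y ->]. exists (f (g Y)). split; [exists (g Y); reflexivity | symmetry; apply gfg].
    + intros a b [X ->] [X' ->]. split; [apply mg|]. intro H.
      rewrite <- (fgf X), <- (fgf X'). apply mf. exact H.
  - apply (cd_iso _ _ _ _ f).
    + intros a _. exists a. reflexivity.
    + intros b [X ->]. exists (g (f X)). split; [exists (f X); reflexivity | symmetry; apply fgf].
    + intros a b [Y ->] [Y' ->]. split; [apply mf|]. intro H.
      rewrite <- (gfg Y), <- (gfg Y'). apply mg. exact H.
Qed.

Definition compl (X : U -> Prop) : U -> Prop := fun x => ~ X x.

Lemma boxB_compl X : boxB R X = compl (diaB R (compl X)).
Proof. apply pext. intro x. unfold compl. split.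
  - intros H [y [Rxy nXy]]. exact (nXy (H y Rxy)).
  - intros H y Rxy. apply NNPP. intro nXy. apply H. exists y. split; assumption.
Qed.
Lemma diaB_compl X : diaB R X = compl (boxB R (compl X)).
Proof. apply pext. intro x. unfold compl. split.
  - intros [y [Rxy Xy]] H. exact (H y Rxy Xy).
  - intro H. apply NNPP. intro H'. apply H. intros y Rxy Xy. apply H'. exists y. split; assumption.
Qed.
Lemma compl_compl X : compl (compl X) = X.
Proof. apply pext. intro x. unfold compl. split; [apply NNPP|]. intros h h'. exact (h' h). Qed.
Lemma compl_subs a b : subs a b <-> subs (compl b) (compl a).
Proof. unfold compl, subs. split.
  - intros H x nb ax. exact (nb (H x ax)).
  - intros H x ax. apply NNPP. intro nb. exact (H x nb ax).
Qed.

Lemma complete_B' : completeL (image_of (boxB R)) (fun a b => @subs U b a).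
Proof. intros K y Hy. split.
  - exists (fun x => forall k, y k x). exact (glbB K y Hy).
  - exists (boxB R (diaW R (fun z => exists k, y k z))). exact (lubB K y Hy).
Qed.
Lemma complete_D' : completeL (image_of (diaB R)) (fun a b => @subs U b a).
Proof. intros K y Hy. split.
  - exists (diaB R (boxW R (fun z => forall k, y k z))). exact (glbD K y Hy).
  - exists (fun x => exists k, y k x). exact (lubD K y Hy).
Qed.

Lemma cd_D_B : completely_distributive (image_of (diaB R)) (@subs U) ->
  completely_distributive (image_of (boxB R)) (@subs U).
Proof.
  intro H.
  assert (H' : completely_distributive (image_of (boxB R)) (fun a b => @subs U b a)).
  { apply (cd_iso (image_of (diaB R)) (@subs U) (image_of (boxB R)) (fun a b => @subs U b a) compl);
      [| | |exact H].
    - intros a [X ->]. exists (compl X). rewrite boxB_compl, compl_compl. reflexivity.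
    - intros b [Y ->]. exists (diaB R (compl Y)). split; [exists (compl Y); reflexivity|].
      exact (boxB_compl Y).
    - intros a b _ _. exact (compl_subs a b). }
  exact (cd_dual _ _ (subs_trans' _) (subs_antisym' _) complete_B' H').
Qed.

Lemma cd_B_D : completely_distributive (image_of (boxB R)) (@subs U) ->
  completely_distributive (image_of (diaB R)) (@subs U).
Proof.
  intro H.
  assert (H' : completely_distributive (image_of (diaB R)) (fun a b => @subs U b a)).
  { apply (cd_iso (image_of (boxB R)) (@subs U) (image_of (diaB R)) (fun a b => @subs U b a) compl);
      [| | |exact H].
    - intros a [X ->]. exists (compl X). rewrite diaB_compl, compl_compl. reflexivity.
    - intros b [Y ->]. exists (boxB R (compl Y)). split; [exists (compl Y); reflexivity|].
      exact (diaB_compl Y).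
    - intros a b _ _. exact (compl_subs a b). }
  exact (cd_dual _ _ (subs_trans' _) (subs_antisym' _) complete_D' H').
Qed.

Lemma gal_diaW_boxB X Y : subs (diaW R X) Y <-> subs X (boxB R Y).
Proof. split.
  - intros H y Xy x Ryx. exact (H x (ex_intro _ y (conj Ryx Xy))).
  - intros H x [y [Ryx Xy]]. exact (H y Xy x Ryx).
Qed.
Lemma gal_diaB_boxW X Y : subs (diaB R X) Y <-> subs X (boxW R Y).
Proof. split.
  - intros H y Xy x Rxy. exact (H x (ex_intro _ y (conj Rxy Xy))).
  - intros H x [y [Rxy Xy]]. exact (H y Xy x Rxy).
Qed.

End Concrete.

Theorem mainTheorem4 (U : Type) (R : U -> U -> Prop) :
  (completely_distributive (DMRS R) (@pair_le U) <->
     completely_distributive (image_of (diaB R)) (@subs U)) /\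
  (completely_distributive (DMRS R) (@pair_le U) <->
     completely_distributive (image_of (boxB R)) (@subs U)) /\
  (completely_distributive (DMRS R) (@pair_le U) <->
     completely_distributive (image_of (diaW R)) (@subs U)) /\
  (completely_distributive (DMRS R) (@pair_le U) <->
     completely_distributive (image_of (boxW R)) (@subs U)).
Proof.
  assert (HD : completely_distributive (DMRS R) (@pair_le U) <->
     completely_distributive (image_of (diaB R)) (@subs U)).
  { split; [apply cd_DM_D|]. intro H. exact (cd_BD_DM U R (cd_D_B U R H) H). }
  assert (HB : completely_distributive (DMRS R) (@pair_le U) <->
     completely_distributive (image_of (boxB R)) (@subs U)).
  { split; [apply cd_DM_B|]. intro H. exact (cd_BD_DM U R H (cd_B_D U R H)). }
  split; [exact HD|]. split; [exact HB|]. split.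
  - rewrite HB. symmetry. apply cd_galois. apply gal_diaW_boxB.
  - rewrite HD. apply cd_galois. apply gal_diaB_boxW.
Qed.
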